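(* Let $\Delta\subset\mathbb{R}^n$ be an $n$-dimensional integral polytope containing the origin and having a unique codimension-1 face $\delta$ not containing the origin, with $\Delta$ the convex hull of $\delta$ and the origin. Let $A=\{V_1,\dots,V_J\}\subset\delta\cap\mathbb{Z}^n$ contain all vertices of $\delta$, and let $T=\{\delta_1,\dots,\delta_h\}$ be a regular decomposition of $(\delta,A)$ with associated concave function $\phi:\delta\to\mathbb{R}$. Let $r\in C(\Delta)$ and let $(u_1,\dots,u_J)$ be a rational solution of $\sum_{j=1}^J u_jV_j=r$, $u_j\ge0$, whose non-zero coordinates are $u_{j_1},\dots,u_{j_k}$. If $r\in\Sigma_i$, then $m(\phi,A;r)=\sum_{j=1}^J u_j\phi(V_j)$ if and only if $\Sigma_i$ contains all the lattice points $V_{j_1},\dots,V_{j_k}$.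
   Context: $C(\Delta)$ is the closed cone generated by $\Delta$ and the origin; $w(r)$ is the least $c\ge0$ with $r\in c\Delta$. A regular decomposition of $(\delta,A)$ is a collection of polytopes $\delta_1,\dots,\delta_h$ with vertices in $A$, of full dimension in $\delta$, whose union is $\delta$ and whose pairwise intersections have lower dimension, together with a piecewise linear function $\phi:\delta\to\mathbb{R}$ that is concave ($\phi(tx+(1-t)x')\ge t\phi(x)+(1-t)\phi(x')$) and whose domains of linearity are exactly the $\delta_i$. $\phi$ is extended to $C(\Delta)\setminus\{0\}$ by $\phi(r)=w(r)\phi(r/w(r))$. $\Sigma_i=C(\delta_i)$ is the closed cone generated by $\delta_i$ and the origin. For $r\in C(\Delta)$, $m(\phi,A;r)=\sup\{\sum_{j=1}^J u_j\phi(V_j) : \sum_j u_jV_j=r,\ u_j\ge0\}$. *)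

(* Defs.v *)
From HB Require Import structures.
From mathcomp Require Import all_boot all_order all_algebra.
From mathcomp Require Import all_classical all_reals.
Set Implicit Arguments. Unset Strict Implicit. Unset Printing Implicit Defensive.
Import Order.TTheory GRing.Theory Num.Theory.
Local Open Scope classical_set_scope.
Local Open Scope ring_scope.

Section Defs.
Variables (R : realType) (n : nat).
Notation V := ('rV[R]_n).

Definition dotv (c x : V) : R := \sum_(j < n) c ord0 j * x ord0 j.

Definition intvec (x : V) : Prop := forall j, x ord0 j \is a Num.int.

Definition is_rat (x : R) : Prop := exists q : rat, x = ratr q.

Definition conv (S : set V) : set V :=
  [set x | exists (k : nat) (p : 'I_k -> V) (w : 'I_k -> R),
     (forall l, S (p l)) /\ (forall l, 0 <= w l) /\ \sum_l w l = 1 /\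
     x = \sum_l w l *: p l].

Definition polytope (P : set V) : Prop :=
  exists (k : nat) (p : 'I_k -> V), P = conv (range p).

Definition integral_polytope (P : set V) : Prop :=
  exists (k : nat) (p : 'I_k -> V), (forall l, intvec (p l)) /\ P = conv (range p).

Definition convex (K : set V) : Prop :=
  forall x y (t : R), K x -> K y -> 0 <= t -> t <= 1 -> K (t *: x + (1 - t) *: y).

(* faces: intersections with supporting hyperplanes (P itself included) *)
Definition face (P F : set V) : Prop :=
  exists (c : V) (b : R), (forall x, P x -> dotv c x <= b) /\
    F = [set x | P x /\ dotv c x = b].

Definition vertex (P : set V) (v : V) : Prop := face P [set v].

Definition aff_indep (k : nat) (p : 'I_k -> V) : bool :=
  row_free (\matrix_(l < k) row_mx (const_mx 1 : 'rV[R]_1) (p l)).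

Definition dim_ge (S : set V) (k : nat) : Prop :=
  exists p : 'I_k.+1 -> V, (forall l, S (p l)) /\ aff_indep p.

Definition has_dim (S : set V) (k : nat) : Prop := dim_ge S k /\ ~ dim_ge S k.+1.

Definition facet (P F : set V) : Prop := face P F /\ has_dim F n.-1.

Definition cone0 (S : set V) : set V :=
  [set x | exists (t : R) (y : V), 0 <= t /\ (S y \/ y = 0) /\ x = t *: y].

Definition affine_on (phi : V -> R) (K : set V) : Prop :=
  exists (a : V) (b : R), forall x, K x -> phi x = dotv a x + b.

Definition concave_on (delta : set V) (phi : V -> R) : Prop :=
  forall x y (t : R), delta x -> delta y -> 0 <= t -> t <= 1 ->
    t * phi x + (1 - t) * phi y <= phi (t *: x + (1 - t) *: y).

(* domain of linearity of phi on delta: a maximal full-dimensional (in delta,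
   i.e. of dimension n-1) convex subset of delta on which phi is affine *)
Definition lin_domain (delta : set V) (phi : V -> R) (K : set V) : Prop :=
  [/\ K `<=` delta, convex K, has_dim K n.-1, affine_on phi K &
      forall K', K `<=` K' -> K' `<=` delta -> convex K' -> affine_on phi K' -> K' = K].

Definition regular_decomposition (J h : nat) (delta : set V) (A : 'I_J -> V)
    (D : 'I_h -> set V) (phi : V -> R) : Prop :=
  [/\ forall i, [/\ polytope (D i), (forall v, vertex (D i) v -> exists j, v = A j)
                  & has_dim (D i) n.-1],
      (forall x, delta x <-> exists i, D i x),
      (forall i i', i != i' -> ~ dim_ge (D i `&` D i') n.-1),
      concave_on delta phi &
      (forall K, lin_domain delta phi K <-> exists i, K = D i)].

Definition mval (J : nat) (A : 'I_J -> V) (phi : V -> R) (r : V) : R :=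
  sup [set s | exists u : 'I_J -> R, (forall j, 0 <= u j) /\
          \sum_j u j *: A j = r /\ s = \sum_j u j * phi (A j)].

End Defs.

(* Main.v *)
Require Import Defs.
From HB Require Import structures.
From mathcomp Require Import all_boot all_order all_algebra.
From mathcomp Require Import all_classical all_reals.
From mathcomp Require Import topology normedtype derive.
From mathcomp Require Import ring lra.
Set Implicit Arguments. Unset Strict Implicit. Unset Printing Implicit Defensive.
Import Order.TTheory GRing.Theory Num.Theory.
Import numFieldTopology.Exports numFieldNormedType.Exports.
Local Open Scope classical_set_scope.
Local Open Scope ring_scope.


Section Basics.
Variables (R : realType) (n : nat).
Notation V := ('rV[R]_n).

Lemma dotvDr (c x y : V) : dotv c (x + y) = dotv c x + dotv c y.
Proof. by rewrite /dotv -big_split /=; apply: eq_bigr => j _; rewrite mxE mulrDr. Qed.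
Lemma dotvZr (c x : V) a : dotv c (a *: x) = a * dotv c x.
Proof. by rewrite /dotv mulr_sumr; apply: eq_bigr => j _; rewrite mxE mulrCA. Qed.
Lemma dotv0r (c : V) : dotv c 0 = 0.
Proof. by rewrite /dotv big1 // => j _; rewrite mxE mulr0. Qed.
Lemma dotvNr (c x : V) : dotv c (- x) = - dotv c x.
Proof. by rewrite -scaleN1r dotvZr mulN1r. Qed.
Lemma dotvBr (c x y : V) : dotv c (x - y) = dotv c x - dotv c y.
Proof. by rewrite dotvDr dotvNr. Qed.
Lemma dotv_sumr (c : V) k (F : 'I_k -> V) : dotv c (\sum_l F l) = \sum_l dotv c (F l).
Proof.
elim/big_ind2: _ => //; first exact: dotv0r.
by move=> x1 x2 y1 y2 <- <-; rewrite dotvDr.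
Qed.
Lemma dotvC (x y : V) : dotv x y = dotv y x.
Proof. by rewrite /dotv; apply: eq_bigr => j _; rewrite mulrC. Qed.
Lemma dotvDl (c d x : V) : dotv (c + d) x = dotv c x + dotv d x.
Proof. by rewrite dotvC dotvDr !(dotvC x). Qed.
Lemma dotvZl (c x : V) a : dotv (a *: c) x = a * dotv c x.
Proof. by rewrite dotvC dotvZr dotvC. Qed.
Lemma dotvNl (c x : V) : dotv (- c) x = - dotv c x.
Proof. by rewrite dotvC dotvNr dotvC. Qed.
Lemma dotvBl (c d x : V) : dotv (c - d) x = dotv c x - dotv d x.
Proof. by rewrite dotvDl dotvNl. Qed.
Lemma dotvvge0 (x : V) : 0 <= dotv x x.
Proof. by rewrite /dotv sumr_ge0 // => j _; rewrite -expr2 sqr_ge0. Qed.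
Lemma dotvv_eq0 (x : V) : dotv x x = 0 -> x = 0.
Proof.
move=> /eqP; rewrite /dotv psumr_eq0; last by move=> j _; rewrite -expr2 sqr_ge0.
move=> /allP H; apply/rowP => j; rewrite mxE.
by have := H j (mem_index_enum j); rewrite /= mulf_eq0 orbb => /eqP.
Qed.
End Basics.


Section Sep.
Variables (R : realType) (k : nat).

Lemma lin_cont (a : 'I_k -> R) (b : R) :
  continuous (fun w : 'rV[R]_k => \sum_l w ord0 l * a l + b).
Proof.
move=> w; apply: continuousD; last exact: cst_continuous.
have H : continuous (fun w : 'rV[R]_k => \sum_l w ord0 l * a l).
  apply: continuous_big; first exact: add_continuous.
  move=> l _ x; apply: continuousM; first exact: coord_continuous.
  exact: cst_continuous.
exact: H.
Qed.
End Sep.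


Definition cI (R : realType) n k (Q : 'I_k -> 'rV[R]_n) (T : {set 'I_k}) (x : 'rV[R]_n) :=
  exists w : 'I_k -> R, [/\ (forall l, 0 <= w l), \sum_l w l = 1,
     (forall l, l \notin T -> w l = 0) & x = \sum_l w l *: Q l].

Section Sep2.
Variables (R : realType) (n k : nat) (Q : 'I_k -> 'rV[R]_n).

Let zz (w : 'rV[R]_k) : 'rV[R]_n := \sum_l w ord0 l *: Q l.

Lemma F_cont (p : 'rV[R]_n) :
  continuous (fun w => dotv (zz w - p) (zz w - p)).
Proof.
have E : (fun w => dotv (zz w - p) (zz w - p)) =
   (fun w => \sum_j (\sum_l w ord0 l * Q l ord0 j + (- p ord0 j)) *
                   (\sum_l w ord0 l * Q l ord0 j + (- p ord0 j))).
  apply: funext => w; rewrite /dotv; apply: eq_bigr => j _.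
  by rewrite !mxE summxE; congr (_ * _); congr (_ + _); apply: eq_bigr => l _; rewrite mxE.
rewrite E.
apply: continuous_big; first exact: add_continuous.
move=> j _ x.
have L := @lin_cont R k (fun l => Q l ord0 j) (- p ord0 j).
exact: (continuousM (L x) (L x)).
Qed.
End Sep2.

Section Sep3.
Variables (R : realType) (n k : nat) (Q : 'I_k -> 'rV[R]_n).

Lemma sep (T : {set 'I_k}) (p : 'rV[R]_n) :
  ~ cI Q T p -> exists c, forall l, l \in T -> dotv c (Q l) < dotv c p.
Proof.
move=> npT.
have [T0|[l0 l0T]] := set_0Vmem T.
  by exists 0 => l; rewrite T0 inE.
pose A l : set R := if l \in T then `[0, 1]%classic else [set 0].
pose zz (w : 'rV[R]_k) : 'rV[R]_n := \sum_l w ord0 l *: Q l.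
pose W := [set w : 'rV[R]_k | forall l, A l (w ord0 l)] `&`
          ((fun w : 'rV[R]_k => \sum_l w ord0 l * 1 + 0) @^-1` [set x | x = 1]).
have cW : compact W.
  apply: compact_closedI.
    apply: rV_compact => l; rewrite /A; case: ifP => _.
      exact: segment_compact.
    exact: compact_set1.
  apply: preimage_closed; last exact: closed_eq.
  by move=> w _; apply: lin_cont.
pose F w := dotv (zz w - p) (zz w - p).
have W0 : W !=set0.
  exists (\row_l (l == l0)%:R); split.
    move=> l; rewrite /A mxE; case: ifP => lT.
      by case: (l == l0); rewrite /= in_itv /= ?ler01 ?lexx.
    by case: (eqVneq l l0) => [ll0|]; [rewrite ll0 l0T in lT|].
  rewrite /= addr0 (bigD1 l0) //= big1 ?mxE ?eqxx ?mulr1 ?addr0 //.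
  by move=> l /negbTE nl; rewrite mxE nl mul0r.
have [ws wsW wsmin] := compact_EVT_min W0 cW (@continuous_subspaceT _ _ _ _ (@F_cont R n k Q p)).
set z := zz ws; set c := p - z.
move: wsW; rewrite inE => -[wsA] /= wsS.
have {}wsS : \sum_l ws ord0 l = 1.
  by rewrite -wsS addr0; apply: eq_bigr => l _; rewrite mulr1.
have ws0 l : l \notin T -> ws ord0 l = 0.
  by move=> lT; have := wsA l; rewrite /A (negbTE lT).
have wsge0 l : 0 <= ws ord0 l.
  have := wsA l; rewrite /A; case: ifP => _; last by move=> ->.
  by rewrite /= in_itv /= => /andP[].
have zI : cI Q T z by exists (fun l => ws ord0 l); split.
have c0 : c != 0.
  by apply/eqP => c0; apply: npT; move/eqP: c0; rewrite subr_eq0 => /eqP ->.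
have key l : l \in T -> dotv c (Q l - z) <= 0.
  move=> lT; have cp : z - p = - c by rewrite /c opprB.
  clearbody c; set d := Q l - z; rewrite leNgt; apply/negP => dpos.
  set del := dotv c d in dpos.
  have dd0 := dotvvge0 d.
  pose t := del / (del + dotv d d).
  have t0 : 0 < t by rewrite divr_gt0 // ltr_wpDr.
  have t1 : t <= 1 by rewrite ler_pdivrMr ?mul1r ?lerDl ?ltr_wpDr.
  pose wt := (1 - t) *: ws + t *: \row_m ((m == l)%:R : R).
  have wtW : W wt.
    split.
      move=> m; rewrite !mxE /A; case: ifP => mT.
        have := wsA m; rewrite /A mT /= !in_itv /= => /andP[a0 a1].
        apply/andP; split; first by case: (m == l); rewrite /= ?mulr1 ?mulr0; nra.
        by case: (m == l); rewrite /= ?mulr1 ?mulr0; nra.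
      have -> : (m == l) = false by apply/negbTE; apply: contraFneq mT => ->.
      by rewrite ws0 ?mT // mulr0 mulr0 addr0.
    rewrite /= addr0.
    under eq_bigr do rewrite mulr1 !mxE.
    rewrite big_split /= -!mulr_sumr wsS (bigD1 l) //= eqxx big1 ?addr0.
      by rewrite !mulr1 subrK.
    by move=> m /negbTE ->.
  have zt : zz wt = z + t *: d.
    rewrite /zz /z /d.
    under eq_bigr do rewrite !mxE scalerDl.
    rewrite big_split /= [X in _ + X = _](bigD1 l) //= eqxx mulr1.
    rewrite [X in _ + (_ + X) = _]big1 ?addr0; last first.
      by move=> m /negbTE ->; rewrite mulr0 scale0r.
    under eq_bigr do rewrite -scalerA.
    rewrite -scaler_sumr scalerBl scale1r scalerBr -addrA [- _ + _]addrC.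
    by [].
  have := wsmin wt (mem_set wtW); rewrite -/(zz wt) -/(zz ws) zt -/z.
  have -> : z + t *: d - p = t *: d - c by rewrite addrAC cp addrC.
  rewrite cp dotvNr dotvNl opprK dotvBr !dotvBl !dotvZr !dotvZl (dotvC d c) -/del.
  move=> H.
  have H2 : 2 * del <= t * dotv d d by nra.
  have H3 : t * dotv d d <= del.
    rewrite /t mulrAC ler_pdivrMr ?ltr_wpDr //.
    nra.
  lra.
exists c => l lT.
have := key l lT; rewrite dotvBr subr_le0 => H.
apply: (le_lt_trans H).
have cc : 0 < dotv c c.
  rewrite lt_def dotvvge0 andbT; apply/eqP => /dotvv_eq0 /eqP; exact/negP.
have -> : p = z + c by rewrite /c addrC subrK.
by rewrite dotvDr ltrDl.
Qed.
End Sep3.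


Section Reindex.
Variables (R : realType) (n k k' : nat) (g : 'I_k' -> 'I_k) (w : 'I_k' -> R).
Definition rw (l : 'I_k) : R := \sum_(m | g m == l) w m.

Lemma rw_sum : \sum_l rw l = \sum_m w m.
Proof. by rewrite (partition_big g predT) //; apply: eq_bigr. Qed.

Lemma rw_sumZ (Q : 'I_k -> 'rV[R]_n) :
  \sum_l rw l *: Q l = \sum_m w m *: Q (g m).
Proof.
rewrite (partition_big g predT) //; apply: eq_bigr => l _.
by rewrite /rw scaler_suml; apply: eq_bigr => m /= /eqP ->.
Qed.

Lemma rw_ge0 : (forall m, 0 <= w m) -> forall l, 0 <= rw l.
Proof. by move=> H l; apply: sumr_ge0. Qed.

Lemma rw_neq0 l : rw l != 0 -> exists m, g m = l /\ w m != 0.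
Proof.
move=> H; apply/not_existsP => /= C; move/eqP: H; apply.
by apply: big1 => m /eqP gm; have := C m; rewrite gm => /not_andP[//|/negP]; rewrite negbK => /eqP.
Qed.
End Reindex.

Section Mink.
Variables (R : realType) (n k : nat) (Q : 'I_k -> 'rV[R]_n).

Lemma cI_mono (T1 T2 : {set 'I_k}) : T1 \subset T2 -> cI Q T1 `<=` cI Q T2.
Proof.
move=> sT x [w [w0 w1 wT ->]]; exists w; split => // l lT2.
by apply: wT; apply/negP => /(fintype.subsetP sT); apply/negP.
Qed.

Lemma cI_Q (T : {set 'I_k}) l : l \in T -> cI Q T (Q l).
Proof.
move=> lT; exists (fun m => (m == l)%:R); split.
- by move=> m; case: (m == l).
- by rewrite (bigD1 l) //= eqxx big1 ?addr0 // => m /negbTE ->.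
- by move=> m mT; case: eqP => // ml; rewrite ml lT in mT.
- by rewrite (bigD1 l) //= eqxx scale1r big1 ?addr0 // => m /negbTE ->; rewrite scale0r.
Qed.

Lemma cI_elim (T : {set 'I_k}) l : l \in T -> cI Q (T :\ l) (Q l) ->
  cI Q T `<=` cI Q (T :\ l).
Proof.
move=> lT [v [v0 v1 vT vE]] x [w [w0 w1 wT ->]].
exists (fun m => (if m == l then 0 else w m) + w l * v m); split.
- move=> m; apply: addr_ge0; first by case: ifP.
  exact: mulr_ge0.
- rewrite big_split /= -mulr_sumr v1 mulr1 (bigD1 l) //= eqxx add0r.
  rewrite -w1 [RHS](bigD1 l) //= addrC; congr (_ + _).
  by apply: eq_bigr => m /negbTE ->.
- move=> m; rewrite !inE negb_and negbK => /orP[/eqP ->|mT].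
    by rewrite eqxx add0r vT ?mulr0 // !inE eqxx.
  rewrite wT // vT ?mulr0 ?addr0; first by case: ifP.
  by rewrite !inE negb_and mT orbT.
  symmetry; under eq_bigr do rewrite scalerDl.
  rewrite big_split /= (bigD1 l) //= eqxx scale0r add0r.
  rewrite [in RHS](bigD1 l) //= addrC; congr (_ + _).
    by rewrite vE scaler_sumr; apply: eq_bigr => m _; rewrite scalerA.
  by apply: eq_bigr => m /negbTE ->.
Qed.

Lemma cI_vertex (T : {set 'I_k}) l : l \in T -> ~ cI Q (T :\ l) (Q l) ->
  vertex (cI Q T) (Q l).
Proof.
move=> lT nl; have [c cH] := sep nl.
set b := dotv c (Q l).
have le m (w : 'I_k -> R) : 0 <= w m -> (m \notin T -> w m = 0) ->
    w m * dotv c (Q m) <= w m * b.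
  move=> w0 wT; have [ml|ml] := eqVneq m l; first by rewrite ml.
  have [mT|mT] := boolP (m \in T); last by rewrite wT ?mul0r.
  by rewrite ler_wpM2l // ltW // cH // !inE ml.
exists c, b; split.
  move=> x [w [w0 w1 wT ->]]; rewrite dotv_sumr.
  rewrite -[b]mul1r -w1 mulr_suml; apply: ler_sum => m _.
  by rewrite dotvZr; exact: (le m w (w0 m) (wT m)).
apply/seteqP; split => x /=.
  by move=> ->; split => //; apply: cI_Q.
move=> [[w [w0 w1 wT ->]]]; rewrite dotv_sumr => E.
have Z : forall m, w m * (b - dotv c (Q m)) = 0.
  have : \sum_m w m * (b - dotv c (Q m)) = 0.
    under eq_bigr do rewrite mulrBr.
    by rewrite sumrB -mulr_suml w1 mul1r -E; under eq_bigr do rewrite dotvZr; rewrite subrr.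
  move/eqP; rewrite psumr_eq0; last first.
    by move=> m _; rewrite mulrBr subr_ge0; exact: (le m w (w0 m) (wT m)).
  by move/allP => H m; apply/eqP; apply: H; rewrite mem_index_enum.
have W0 m : m != l -> w m = 0.
  move=> ml; have [mT|mT] := boolP (m \in T); last exact: wT.
  have := Z m; move/eqP; rewrite mulf_eq0 subr_eq0 => /orP[/eqP //|/eqP bE].
  by have := cH m; rewrite !inE ml mT /= -bE ltxx => /(_ isT).
have wl : w l = 1.
  by rewrite -w1 (bigD1 l) //= big1 ?addr0 // => m /W0.
rewrite (bigD1 l) //= wl scale1r big1 ?addr0 // => m /W0 ->.
by rewrite scale0r.
Qed.

Definition vset : {set 'I_k} := finset (fun l : 'I_k => `[< vertex (cI Q (setTfor 'I_k)) (Q l) >]).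

Lemma mink_nol (T : {set 'I_k}) : cI Q (setTfor 'I_k) `<=` cI Q T ->
  ~ (exists l, l \in T /\ cI Q (T :\ l) (Q l)) ->
  cI Q (setTfor 'I_k) `<=` cI Q (T :&: vset).
Proof.
move=> sub nol.
have E : cI Q T = cI Q (setTfor 'I_k).
  by apply/seteqP; split => //; apply: cI_mono; apply: finset.subsetT.
apply: (subset_trans sub); apply: cI_mono; apply/fintype.subsetP => l lT.
rewrite !inE lT /=; apply/asboolP; rewrite -E; apply: cI_vertex => // H.
by apply: nol; exists l.
Qed.

Lemma mink_ind m (T : {set 'I_k}) : (#|T| <= m)%N -> cI Q (setTfor 'I_k) `<=` cI Q T ->
  cI Q (setTfor 'I_k) `<=` cI Q (T :&: vset).
Proof.
elim: m T => [|m IH] T cT sub.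
  apply: mink_nol => // -[l [lT _]].
  by move: cT; rewrite (cardsD1 l T) lT.
have [[l [lT lc]]|nol] := pselect (exists l, l \in T /\ cI Q (T :\ l) (Q l)).
  have H := IH (T :\ l).
  have : cI Q (setTfor 'I_k) `<=` cI Q ((T :\ l) :&: vset).
    apply: H; first by move: cT; rewrite (cardsD1 l T) lT.
    exact: subset_trans sub (cI_elim lT lc).
  move=> H2; apply: (subset_trans H2); apply: cI_mono.
  by apply: finset.setSI; apply: finset.subsetDl.
exact: mink_nol.
Qed.

Lemma mink : cI Q (setTfor 'I_k) `<=` cI Q vset.
Proof.
have := @mink_ind #|setTfor 'I_k| (setTfor 'I_k) (leqnn _) (fun x h => h).
by rewrite finset.setTI.
Qed.
End Mink.

Section Conv.
Variables (R : realType) (n k : nat) (Q : 'I_k -> 'rV[R]_n).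

Lemma conv_cI : conv (range Q) = cI Q (setTfor 'I_k).
Proof.
apply/seteqP; split => x.
  move=> [k' [p [w [pQ [w0 [w1 ->]]]]]].
  have g m : {l | Q l = p m}.
    by apply: cid; have [l _ E] := pQ m; exists l.
  exists (rw (fun m => sval (g m)) w); split.
  - exact: rw_ge0.
  - by rewrite rw_sum.
  - by move=> l; rewrite inE.
  - by rewrite rw_sumZ; apply: eq_bigr => m _; rewrite (svalP (g m)).
move=> [w [w0 w1 _ ->]]; exists k, Q, w; split => //; split => //; split => //.
Qed.
End Conv.


Section Hull.
Variables (R : realType) (n : nat).

Lemma hull (q : 'I_n -> 'rV[R]_n) (c x : 'rV[R]_n) (b0 : R) :
  aff_indep q -> c != 0 -> (forall l, dotv c (q l) = b0) -> dotv c x = b0 ->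
  exists al : 'I_n -> R, \sum_l al l = 1 /\ x = \sum_l al l *: q l.
Proof.
move=> /eqP rkM c0 cq cx.
set M := \matrix_(l < n) row_mx (const_mx 1 : 'rV[R]_1) (q l) in rkM.
pose w : 'M[R]_(1 + n, 1) := col_mx (const_mx (- b0)) c^T.
have E1 (y : 'rV[R]_n) : dotv c y = b0 ->
    row_mx (const_mx 1 : 'rV[R]_1) y *m w = 0.
  move=> cy; rewrite /w mul_row_col; apply/matrixP => a z.
  rewrite !mxE big_ord1 !mxE mul1r -cy /dotv.
  rewrite (ord1 a) (ord1 z) [X in _ + X = _](_ : _ = \sum_j c ord0 j * y ord0 j).
    by rewrite addrC subrr.
  by apply: eq_bigr => j _; rewrite !mxE mulrC.
have Mw : M *m w = 0.
  apply/row_matrixP => l; rewrite row_mul rowK row0.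
  exact: E1.
pose xv : 'rV[R]_(1 + n) := row_mx (const_mx 1) x.
have xw : xv *m w = 0 by apply: E1.
have rkw : \rank w = 1%N.
  apply/eqP; rewrite eqn_leq rank_leq_col lt0n mxrank_eq0.
  apply: contra c0 => /eqP w0; apply/eqP/rowP => j.
  have := congr1 (fun A : 'M_(1 + n, 1) => A (rshift 1 j) ord0) w0.
  by rewrite /w col_mxEd !mxE.
have sMK : (M <= kermx w)%MS by apply/sub_kermxP.
have KM : (kermx w <= M)%MS.
  rewrite -(mxrank_leqif_sup sMK).2 mxrank_ker rkw rkM.
  by rewrite add1n subn1.
have : (xv <= M)%MS by apply: submx_trans KM; apply/sub_kermxP.
move=> /submxP [Dm xD].
have Ment l j : M l j = row_mx (const_mx 1 : 'rV[R]_1) (q l) ord0 j.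
  by rewrite /M [LHS]mxE.
exists (fun l => Dm ord0 l); split.
  have := congr1 (fun A : 'rV_(1 + n) => A ord0 (lshift n ord0)) xD.
  rewrite /xv row_mxEl mxE [RHS]mxE => ->.
  by apply: eq_bigr => l _; rewrite Ment row_mxEl mxE mulr1.
apply/rowP => j.
have := congr1 (fun A : 'rV_(1 + n) => A ord0 (rshift 1 j)) xD.
rewrite /xv row_mxEr [RHS]mxE => ->; rewrite summxE.
by apply: eq_bigr => l _; rewrite Ment row_mxEr mxE.
Qed.
End Hull.


Section Cvx.
Variables (R : realType) (n : nat).
Notation V := 'rV[R]_n.

Lemma convex_sum (K : set V) : convex K -> forall k (p : 'I_k -> V) (w : 'I_k -> R),
  (forall l, K (p l)) -> (forall l, 0 <= w l) -> \sum_l w l = 1 ->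
  K (\sum_l w l *: p l).
Proof.
move=> cK; elim=> [|k IH] p w Kp w0 w1.
  by move: w1; rewrite big_ord0 => /eqP; rewrite eq_sym oner_eq0.
rewrite big_ord_recr /=; move: w1; rewrite big_ord_recr /= => w1.
set s := \sum_(l < k) w (widen_ord (leqnSn k) l) in w1.
have s0 : 0 <= s by apply: sumr_ge0.
have [s_eq0|s_neq0] := eqVneq s 0.
  have W0 l : w (widen_ord (leqnSn k) l) = 0.
    move/eqP: s_eq0; rewrite psumr_eq0 // => /allP /(_ l (mem_index_enum l)) /eqP.
    by [].
  rewrite big1 ?add0r; last by move=> l _; rewrite W0 scale0r.
  by move: w1; rewrite s_eq0 add0r => ->; rewrite scale1r.
have sp : 0 < s by rewrite lt_def s_neq0.
have := IH (fun l => p (widen_ord (leqnSn k) l)) (fun l => w (widen_ord (leqnSn k) l) / s).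
move=> /(_ (fun l => Kp _)) /(_ (fun l => divr_ge0 (w0 _) s0)).
have H : \sum_l w (widen_ord (leqnSn k) l) / s = 1.
  by rewrite -mulr_suml -/s divff.
move=> /(_ H) Kz.
have s1 : s <= 1 by rewrite -w1 lerDl.
have := cK _ _ s Kz (Kp ord_max) s0 s1.
have -> : 1 - s = w ord_max by lra.
congr (K (_ + _)); rewrite scaler_sumr; apply: eq_bigr => l _.
by rewrite scalerA mulrCA divff // mulr1.
Qed.

Lemma conv_convex (S : set V) : convex (conv S).
Proof.
move=> x y t [k1 [p1 [w1 [S1 [w10 [w11 ->]]]]]] [k2 [p2 [w2 [S2 [w20 [w21 ->]]]]]] t0 t1.
have sl (a : 'I_k1) : fintype.split (lshift k2 a) = inl a := unsplitK (inl _ a).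
have sr (b : 'I_k2) : fintype.split (rshift k1 b) = inr b := unsplitK (inr _ b).
exists (k1 + k2)%N, (fun i => match fintype.split i with inl a => p1 a | inr b => p2 b end),
  (fun i => match fintype.split i with inl a => t * w1 a | inr b => (1 - t) * w2 b end).
split; first by move=> i; case: (fintype.split i).
split; first by move=> i; case: (fintype.split i) => a; apply: mulr_ge0 => //; rewrite subr_ge0.
split.
  rewrite big_split_ord /=.
  under eq_bigr do rewrite sl.
  under [X in _ + X]eq_bigr do rewrite sr.
  by rewrite -!mulr_sumr w11 w21 !mulr1 addrC subrK.
rewrite big_split_ord /=.
symmetry; under eq_bigr do rewrite sl.
under [X in _ + X]eq_bigr do rewrite sr.
rewrite !scaler_sumr; congr (_ + _); apply: eq_bigr => l _; by rewrite scalerA.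
Qed.
End Cvx.


Section PhiLe.
Variables (R : realType) (n : nat).
Notation V := 'rV[R]_n.

Lemma phi_le (delta K : set V) (phi : V -> R) a b c0 b0 (q : 'I_n -> V) :
  concave_on delta phi -> convex K -> K `<=` delta ->
  (forall x, K x -> phi x = dotv a x + b) ->
  (forall l, K (q l)) -> aff_indep q -> c0 != 0 ->
  (forall x, delta x -> dotv c0 x = b0) ->
  forall x, delta x -> phi x <= dotv a x + b.
Proof.
move=> phic cK sK aff Kq aq c00 dc x dx.
have [al [al1 xE]] := hull aq c00 (fun l => dc _ (sK _ (Kq l))) (dc x dx).
have n0 : n != 0%N.
  apply/eqP => n0; move: al1; rewrite big1 => [/eqP|l _]; first by rewrite eq_sym oner_eq0.
  by have := ltn_ord l; rewrite [X in (_ < X)%N]n0.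
have nR : (n%:R : R) != 0 by rewrite pnatr_eq0.
pose beta : R := n%:R^-1.
have beta0 : 0 < beta by rewrite invr_gt0 ltr0n lt0n.
have sbeta : \sum_(l < n) beta = 1 by rewrite sumr_const card_ord -mulr_natl divff.
pose A := \sum_l `|al l|.
have A0 : 0 <= A by apply: sumr_ge0 => l _; exact: normr_ge0.
pose s := beta / (1 + A).
have s0 : 0 < s by rewrite divr_gt0 // ltr_wpDr.
pose gam l := beta + s * (beta - al l).
pose pp := \sum_l beta *: q l.
pose y := \sum_l gam l *: q l.
have Kpp : K pp by apply: convex_sum => // l; exact: ltW.
have Ky : K y.
  apply: convex_sum => // [l|].
    rewrite /gam mulrBr addrA subr_ge0.
    have h1 : s * al l <= s * A.
      apply: (le_trans (ler_wpM2l (ltW s0) (ler_norm (al l)))).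
      apply: ler_wpM2l; first exact: ltW.
      by rewrite /A (bigD1 l) //= lerDl sumr_ge0 // => m _; exact: normr_ge0.
    have h2 : s * A <= beta.
      rewrite /s mulrAC ler_pdivrMr ?ltr_wpDr //; nra.
    have h3 : 0 <= s * beta by rewrite mulr_ge0 // ltW.
    lra.
  rewrite /gam big_split /= sbeta -mulr_sumr sumrB sbeta al1 subrr mulr0.
  by rewrite addr0.
have yE : y = pp + s *: (pp - x).
  rewrite /y /gam xE /pp -sumrB scaler_sumr -big_split /=.
  by apply: eq_bigr => l _; rewrite scalerDl -scalerBl scalerA.
pose t := (1 + s)^-1.
have s1 : 1 + s != 0 by rewrite gt_eqF // ltr_wpDr // ltW.
have t0 : 0 <= t by rewrite invr_ge0 addr_ge0 // ltW.
have t1 : t <= 1 by rewrite invf_le1 ?lerDl ?ltW // ltr_wpDr // ltW.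
have ppE : t *: y + (1 - t) *: x = pp.
  rewrite yE; apply/rowP => j; rewrite !mxE /t; field.
  exact: s1.
have dy : delta y by apply: sK.
have := phic y x t dy dx t0 t1; rewrite ppE (aff _ Kpp) (aff _ Ky).
rewrite -ppE dotvDr !dotvZr => H.
have s10 : 0 < 1 + s by lra.
have H2 : 0 < 1 - t by rewrite subr_gt0 /t invf_lt1 // ltrDl.
have : (1 - t) * phi x <= (1 - t) * (dotv a x + b) by lra.
by rewrite ler_pM2l.
Qed.
End PhiLe.

Unset Implicit Arguments. Set Strict Implicit.

Theorem mainTheorem2 (R : realType) (n : nat) (Delta delta : set 'rV[R]_n)
    (J : nat) (V : 'I_J -> 'rV[R]_n) (h : nat) (D : 'I_h -> set 'rV[R]_n)
    (phi : 'rV[R]_n -> R) (r : 'rV[R]_n) (u : 'I_J -> R) (i : 'I_h) :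
  integral_polytope Delta -> has_dim Delta n -> Delta 0 ->
  facet Delta delta -> ~ delta 0 ->
  (forall F, facet Delta F -> ~ F 0 -> F = delta) ->
  Delta = conv (delta `|` [set 0]) ->
  injective V -> (forall j, delta (V j) /\ intvec (V j)) ->
  (forall v, vertex delta v -> exists j, V j = v) ->
  regular_decomposition delta V D phi ->
  cone0 Delta r ->
  (forall j, is_rat (u j)) -> (forall j, 0 <= u j) -> \sum_j u j *: V j = r ->
  cone0 (D i) r ->
  (mval V phi r = \sum_j u j * phi (V j) <->
     (forall j, u j != 0 -> cone0 (D i) (V j))).
Proof.
move: Delta delta V D phi r u i.
case: n => [|n] Delta delta V D phi r u i _ _ D0 [[c0 [b0 [fle fE]]] ddim] nd0 _ DE _ Vd _
  [Dpoly Dcov _ phic Dlin] _ _ u0 ur ri.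
  exfalso; have [[p [pd _]] _] := ddim.
  by have := pd ord0; rewrite (thinmx0 (p ord0)).
have dE x : delta x <-> Delta x /\ dotv c0 x = b0 by rewrite fE.
have dc x : delta x -> dotv c0 x = b0 := fun hx => ((dE x).1 hx).2.
have b0ge : 0 <= b0 by have := fle 0 D0; rewrite dotv0r.
have b0ne : b0 != 0.
  by apply/eqP => b00; apply: nd0; apply/dE; split => //; rewrite dotv0r.
have b0p : 0 < b0 by rewrite lt_def b0ne.
have dconv : convex delta.
  move=> x y t dx dy t0 t1; apply/dE; split.
    rewrite DE; apply: conv_convex => //; rewrite -DE.
      exact: ((dE _).1 dx).1.
    exact: ((dE _).1 dy).1.
  by rewrite dotvDr !dotvZr !dc //; ring.
have [Dsub Dcvx Ddim [a [b aff]] Dmax] := (Dlin (D i)).2 (ex_intro _ i erefl).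
have [[q [qD qa]] _] := Ddim.
have c00 : c0 != 0.
  apply/eqP => c0E; have := dc _ (Dsub _ (qD ord0)).
  by rewrite c0E dotvC dotv0r => /esym/eqP; rewrite (negbTE b0ne).
have ple := phi_le phic Dcvx Dsub aff qD qa c00 dc.
have K'eq : [set x | delta x /\ phi x = dotv a x + b] = D i.
  apply: Dmax.
  - by move=> x Dx; split; [exact: Dsub | exact: aff].
  - by move=> x [].
  - move=> x y t [dx px] [dy py] t0 t1; split; first exact: dconv.
    apply/eqP; rewrite eq_le ple ?andbT; last exact: dconv.
    have := phic x y t dx dy t0 t1; rewrite px py dotvDr !dotvZr.
    apply: le_trans; rewrite le_eqVlt; apply/orP; left; apply/eqP; ring.
  - by exists a, b => x [].
have inD x : delta x -> phi x = dotv a x + b -> D i x.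
  by move=> dx px; rewrite -K'eq.
have coneD x : cone0 (D i) x -> delta x -> D i x.
  move=> [t [y [t0 [[Dy|->] ->]]]] dx; last by move: dx; rewrite scaler0.
  have := dc _ dx; rewrite dotvZr dc; last exact: Dsub.
  move=> /eqP; rewrite -subr_eq0 -{2}(mul1r b0) -mulrBl mulf_eq0 (negbTE b0ne) orbF.
  by rewrite subr_eq0 => /eqP ->; rewrite scale1r.
have Dcone x : D i x -> cone0 (D i) x.
  by move=> Dx; exists 1, x; split; [exact: ler01 | split; [left | rewrite scale1r]].
pose S := dotv c0 r / b0.
pose M := dotv a r + b * S.
have sumu u' : \sum_j u' j *: V j = r -> \sum_j u' j = S.
  move=> ur'; rewrite /S -ur' dotv_sumr.
  under [X in _ = X / _]eq_bigr do rewrite dotvZr.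
  rewrite [X in _ = X / _](eq_bigr (fun j => u' j * b0)); last by move=> j _; rewrite dc //; exact: (Vd j).1.
  by rewrite -mulr_suml mulfK.
have eqM u' : \sum_j u' j *: V j = r -> \sum_j u' j * (dotv a (V j) + b) = M.
  move=> ur'; under eq_bigr do rewrite mulrDr.
  rewrite big_split /= -mulr_suml (sumu _ ur') /M -ur' dotv_sumr mulrC.
  by congr (_ + _); apply: eq_bigr => j _; rewrite dotvZr.
have leM u' : (forall j, 0 <= u' j) -> \sum_j u' j *: V j = r ->
    \sum_j u' j * phi (V j) <= M.
  move=> u0' ur'; rewrite -(eqM _ ur'); apply: ler_sum => j _.
  by apply: ler_wpM2l => //; apply: ple; exact: (Vd j).1.
have eqsupp u' : \sum_j u' j *: V j = r -> (forall j, u' j != 0 -> D i (V j)) ->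
    \sum_j u' j * phi (V j) = M.
  move=> ur' su; rewrite -(eqM _ ur'); apply: eq_bigr => j _.
  have [->|uj] := eqVneq (u' j) 0; first by rewrite !mul0r.
  by rewrite aff //; apply: su.
have supM : (exists u', [/\ (forall j, 0 <= u' j), \sum_j u' j *: V j = r &
    (forall j, u' j != 0 -> D i (V j))]) -> mval V phi r = M.
  move=> [u' [u0' ur' su]].
  have EM : [set s | exists u0 : 'I_J -> R, (forall j, 0 <= u0 j) /\
          \sum_j u0 j *: V j = r /\ s = \sum_j u0 j * phi (V j)] M.
    by exists u'; split => //; split => //; rewrite eqsupp.
  apply/eqP; rewrite eq_le; apply/andP; split.
    apply: ge_sup; first by exists M.
    by move=> s [u1 [u10 [ur1 ->]]]; apply: leM.
  apply: ub_le_sup => //; exists M.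
  by move=> s [u1 [u10 [ur1 ->]]]; apply: leM.
have wit : exists u', [/\ (forall j, 0 <= u' j), \sum_j u' j *: V j = r &
    (forall j, u' j != 0 -> D i (V j))].
  move: ri => [t [y [t0 [[Dy|->] ->]]]]; last first.
    exists (fun _ => 0); split => // [|j]; last by rewrite eqxx.
    by rewrite scaler0 big1 // => j _; rewrite scale0r.
  have [[k [Q DQ]] Dvert _] := Dpoly i.
  rewrite conv_cI in DQ.
  have := @mink R _ _ Q y; rewrite -DQ => /(_ Dy) [w [w0 w1 wT yE]].
  have vj l : l \in vset Q -> exists j, Q l = V j.
    by rewrite inE => /asboolP; rewrite -DQ => /Dvert.
  have [l0 wl0] : exists l0, w l0 != 0.
    apply/not_existsP => /= C; move: w1; rewrite big1 => [/eqP|l _].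
      by rewrite eq_sym oner_eq0.
    by have := C l; move=> /negP; rewrite negbK => /eqP.
  have l0v : l0 \in vset Q.
    by apply: contraNT wl0 => /wT ->; rewrite eqxx.
  have [j0 _] := vj l0 l0v.
  pose g l := if pselect (exists j, Q l = V j) is left hh then sval (cid hh) else j0.
  have gE l : w l != 0 -> Q l = V (g l).
    move=> wl; rewrite /g; case: pselect => [hh|nh].
      exact: (svalP (cid hh)).
    by exfalso; apply: nh; apply: vj; apply: contraNT wl => /wT ->; rewrite eqxx.
  exists (fun j => t * rw g w j); split.
  - by move=> j; apply: mulr_ge0 => //; apply: rw_ge0.
  - under eq_bigr do rewrite -scalerA.
    rewrite -scaler_sumr rw_sumZ yE; congr (_ *: _); apply: eq_bigr => l _.
    by have [->|wl] := eqVneq (w l) 0; [rewrite !scale0r | rewrite (gE l wl)].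
  - move=> j; rewrite mulf_eq0 negb_or => /andP[_ /rw_neq0 [m [gm wm]]].
    by rewrite -gm -(gE m wm) DQ; apply: cI_Q; rewrite inE.
have mM : mval V phi r = M by apply: supM.
split.
  move=> E j uj; apply: Dcone.
  have E2 : \sum_j u j * ((dotv a (V j) + b) - phi (V j)) = 0.
    under eq_bigr do rewrite mulrBr.
    by rewrite sumrB (eqM _ ur) -E mM subrr.
  move/eqP: E2; rewrite psumr_eq0; last first.
    move=> j' _; apply: mulr_ge0 => //; rewrite subr_ge0; apply: ple; exact: (Vd j').1.
  move=> /allP /(_ j (mem_index_enum j)) /eqP /eqP; rewrite mulf_eq0 (negbTE uj) /= subr_eq0.
  move=> /eqP E3; apply: inD; first exact: (Vd j).1.
  by rewrite E3.
move=> H; rewrite mM; symmetry; apply: eqsupp => // j uj.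
by apply: coneD; [exact: H | exact: (Vd j).1].
Qed.
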